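(* Fix $m,n\in\mathbb N$. For $(m+1)$-tuples of $n\times n$ positive-definite symmetric matrices $A_0,\dots,A_m$ define \[\mathcal F_n(A_0,\dots,A_m)=\prod_{i=0}^m\det(A_i)^{\frac{m}{2(m+1)}}\det(M)^{-\frac12},\] where $M$ is the $nm\times nm$ block matrix whose $(i,j)$ block ($1\le i,j\le m$) is $A_0+A_i$ if $i=j$ and $A_0$ if $i\ne j$. Then $\sup\mathcal F_n=(m+1)^{-n/2}$, and the supremum is attained at $(A_0,\dots,A_m)$ if and only if $A_0=A_1=\cdots=A_m$. *)

(* Defs.v *)
From HB Require Import structures.
From mathcomp Require Import all_boot all_order all_algebra.
From mathcomp Require Import all_classical all_reals all_analysis.
Set Implicit Arguments. Unset Strict Implicit. Unset Printing Implicit Defensive.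
Import Order.TTheory GRing.Theory Num.Theory.
Local Open Scope ring_scope.

Definition posdef_sym (R : realType) (n : nat) (A : 'M[R]_n) : Prop :=
  A^T = A /\ forall v : 'rV[R]_n, v != 0 -> 0 < (v *m A *m v^T) ord0 ord0.

(* The nm x nm block matrix: block (i,j), 1 <= i,j <= m, is A_0 + A_i if
   i = j and A_0 otherwise.  Block index i : 'I_m stands for i+1. *)
Definition blockM (R : realType) (m n : nat) (A : 'I_m.+1 -> 'M[R]_n)
  : 'M[R]_(\sum_(i < m) n)%N :=
  @mxblock R m m (fun _ => n) (fun _ => n)
    (fun i j => if i == j then A ord0 + A (lift ord0 i) else A ord0).

Definition Fn (R : realType) (m n : nat) (A : 'I_m.+1 -> 'M[R]_n) : R :=
  (\prod_(i < m.+1) powR (\det (A i)) (m%:R / (2 * (m.+1)%:R)))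
  * powR (\det (blockM A)) (- (1 / 2)).

(* Main.v *)
Require Import Defs.
From HB Require Import structures.
From mathcomp Require Import all_boot all_order all_algebra.
From mathcomp Require Import all_classical all_reals all_analysis.
From mathcomp Require Import ring lra.
Set Implicit Arguments. Unset Strict Implicit. Unset Printing Implicit Defensive.
Import Order.TTheory GRing.Theory Num.Theory.
Local Open Scope ring_scope.

Definition qf (R : realFieldType) n (A : 'M[R]_n) (v : 'rV[R]_n) : R :=
  (v *m A *m v^T) 0 0.
Definition PD (R : realFieldType) n (A : 'M[R]_n) : Prop :=
  A^T = A /\ forall v : 'rV[R]_n, v != 0 -> 0 < qf A v.

Definition aa (R : realFieldType) n (X : 'M[R]_(1 + n)) : R := ulsubmx X 0 0.
Definition rr (R : realFieldType) n (X : 'M[R]_(1 + n)) : 'M[R]_(1, n) := ursubmx X.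
Definition Sc (R : realFieldType) n (X : 'M[R]_(1 + n)) : 'M[R]_n :=
  drsubmx X - (aa X)^-1 *: ((rr X)^T *m rr X).

Lemma qfD (R : realFieldType) n (A B : 'M[R]_n) v : qf (A + B) v = qf A v + qf B v.
Proof. by rewrite /qf mulmxDr mulmxDl mxE. Qed.

Lemma qfN (R : realFieldType) n (A : 'M[R]_n) v : qf (- A) v = - qf A v.
Proof. by rewrite /qf mulmxN mulNmx mxE. Qed.

Lemma qfZ (R : realFieldType) n a (A : 'M[R]_n) v : qf (a *: A) v = a * qf A v.
Proof. by rewrite /qf -scalemxAr -scalemxAl mxE. Qed.

Lemma qf_sum (R : realFieldType) n k (B : 'I_k -> 'M[R]_n) v :
  qf (\sum_i B i) v = \sum_i qf (B i) v.
Proof.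
elim/big_ind2: _ => //; last by move=> *; rewrite qfD; congr (_ + _).
by rewrite /qf mulmx0 mul0mx mxE.
Qed.

Lemma symE (R : realFieldType) n (X : 'M[R]_(1 + n)) : X^T = X ->
  X = block_mx (aa X)%:M (rr X) (rr X)^T (drsubmx X).
Proof.
move=> sX; rewrite -{1}(submxK X) /aa /rr -mx11_scalar; congr block_mx.
by rewrite trmx_ursub sX.
Qed.

Lemma qf11 (R : realFieldType) (u : 'M[R]_1) : u = (u 0 0)%:M.
Proof. exact: mx11_scalar. Qed.

Lemma rv_tr (R : realFieldType) n (r v : 'rV[R]_n) :
  v *m r^T = ((r *m v^T) 0 0)%:M.
Proof.
rewrite [LHS]mx11_scalar; congr (_%:M).
have -> : v *m r^T = (r *m v^T)^T by rewrite trmx_mul trmxK.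
by rewrite mxE.
Qed.

Lemma qf_row (R : realFieldType) n (X : 'M[R]_(1 + n)) (t : R) (v : 'rV[R]_n) :
  X^T = X ->
  qf X (row_mx t%:M v) =
  aa X * t ^+ 2 + 2 * t * (rr X *m v^T) 0 0 + qf (drsubmx X) v.
Proof.
move=> sX; rewrite /qf {1}(symE sX) mul_row_block tr_row_mx mul_row_col.
rewrite tr_scalar_mx (rv_tr (rr X) v).
set q := (rr X *m v^T) 0 0. set W := v *m drsubmx X *m v^T.
rewrite !mulmxDl -/W -[t%:M *m rr X *m v^T]mulmxA [rr X *m v^T]mx11_scalar -/q.
rewrite !mul_scalar_mx !mul_mx_scalar !mxE /= !mulr1n.
ring.
Qed.

Lemma qf_Sc (R : realFieldType) n (X : 'M[R]_(1 + n)) (v : 'rV[R]_n) :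
  qf (Sc X) v = qf (drsubmx X) v - (rr X *m v^T) 0 0 ^+ 2 / aa X.
Proof.
rewrite /Sc qfD qfN qfZ; congr (_ - _).
rewrite /qf mulmxA (rv_tr (rr X) v) mul_scalar_mx -scalemxAl mxE.
by rewrite mulrC expr2.
Qed.

Lemma qf_compl (R : realFieldType) n (X : 'M[R]_(1 + n)) (t : R) (v : 'rV[R]_n) :
  X^T = X -> aa X != 0 ->
  qf X (row_mx t%:M v) =
  qf (Sc X) v + aa X * (t + (rr X *m v^T) 0 0 / aa X) ^+ 2.
Proof.
move=> sX a0; rewrite qf_row // qf_Sc.
set q := (rr X *m v^T) 0 0; set a := aa X; set w := qf _ v.
by field.
Qed.

Lemma row1_neq0 (R : realFieldType) n (t : R) (v : 'rV[R]_n) :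
  (t != 0) || (v != 0) -> row_mx t%:M v != 0.
Proof.
case/orP=> h; apply/negP; rewrite row_mx_eq0 => /andP[/eqP h1 /eqP h2].
  by move: h1 => /matrixP/(_ 0 0); rewrite !mxE /= mulr1n; apply/eqP.
by rewrite h2 eqxx in h.
Qed.

Lemma qf0 (R : realFieldType) n (A : 'M[R]_n) : qf A 0 = 0.
Proof. by rewrite /qf trmx0 (mulmx0 _ (0 *m A)) mxE. Qed.

Lemma rv0 (R : realFieldType) n (r : 'rV[R]_n) : (r *m (0 : 'rV[R]_n)^T) 0 0 = 0.
Proof. by rewrite trmx0 (mulmx0 1 r) mxE. Qed.

Lemma PD_aa (R : realFieldType) n (X : 'M[R]_(1 + n)) : PD X -> 0 < aa X.
Proof.
case=> sX pX.
have h : row_mx (1 : R)%:M (0 : 'rV[R]_n) != 0 by apply: row1_neq0; rewrite oner_neq0.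
have := pX _ h.
by rewrite qf_row // qf0 rv0 expr1n !mulr1 mulr0 !addr0.
Qed.

Lemma Sc_sym (R : realFieldType) n (X : 'M[R]_(1 + n)) : X^T = X -> (Sc X)^T = Sc X.
Proof.
move=> sX; rewrite /Sc linearB /= linearZ /= trmx_mul trmxK trmx_drsub sX.
by [].
Qed.

Lemma PD_Sc (R : realFieldType) n (X : 'M[R]_(1 + n)) : PD X -> PD (Sc X).
Proof.
move=> PX; have a0 := PD_aa PX; case: PX => sX pX; split; first exact: Sc_sym.
move=> v v0; set t := - ((rr X *m v^T) 0 0 / aa X).
have h : row_mx t%:M v != 0 by apply: row1_neq0; rewrite v0 orbT.
have := pX _ h.
by rewrite qf_compl // ?gt_eqF // /t addNr expr0n /= mulr0 addr0.
Qed.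

Lemma det_Sc (R : realFieldType) n (X : 'M[R]_(1 + n)) :
  X^T = X -> aa X != 0 -> \det X = aa X * \det (Sc X).
Proof.
move=> sX a0.
have E : X = block_mx 1%:M 0 ((aa X)^-1 *: (rr X)^T) 1%:M *m
             block_mx (aa X)%:M (rr X) 0 (Sc X).
  rewrite mulmx_block {1}(symE sX) !mul1mx !mul0mx !addr0.
  congr block_mx.
    by rewrite mul_mx_scalar scalerA mulrV // ?unitfE // scale1r.
  by rewrite /Sc -scalemxAl addrC subrK.
by rewrite {1}E det_mulmx det_lblock det_ublock !det1 det_scalar1 !mul1r.
Qed.

Lemma det_PD (R : realFieldType) n (A : 'M[R]_n) : PD A -> 0 < \det A.
Proof.
elim: n A => [|n IH] A PA; first by rewrite det_mx00.
have a0 := PD_aa (PA : PD (A : 'M[R]_(1 + n))).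
rewrite (det_Sc (PA.1 : (A : 'M[R]_(1 + n))^T = A)) ?gt_eqF //.
by rewrite mulr_gt0 // IH //; apply: PD_Sc.
Qed.

Lemma qf_e1 (R : realFieldType) n (X : 'M[R]_(1 + n)) :
  X^T = X -> qf X (row_mx 1%:M 0) = aa X.
Proof. by move=> sX; rewrite qf_row // qf0 rv0 expr1n !mulr1 mulr0 !addr0. Qed.

Lemma e1_neq0 (R : realFieldType) n : row_mx (1 : R)%:M (0 : 'rV[R]_n) != 0.
Proof. by apply: row1_neq0; rewrite oner_neq0. Qed.

Lemma rv_eq (R : realFieldType) n (r1 r2 : 'rV[R]_n) :
  (forall v : 'rV[R]_n, (r1 *m v^T) 0 0 = (r2 *m v^T) 0 0) -> r1 = r2.
Proof.
move=> h; apply/rowP => j; move: (h (delta_mx 0 j)).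
rewrite !mxE (bigD1 j) //= [X in _ = X](bigD1 j) //= !mxE !eqxx !mulr1.
by rewrite !big1 ?addr0 // => i /negbTE ij; rewrite !mxE ij andbF mulr0.
Qed.

Lemma parts_eq (R : realFieldType) n (X Y : 'M[R]_(1 + n)) :
  X^T = X -> Y^T = Y -> aa X = aa Y -> rr X = rr Y -> Sc X = Sc Y -> X = Y.
Proof.
move=> sX sY ha hr hS; rewrite (symE sX) (symE sY) ha hr.
have dr (Z : 'M[R]_(1 + n)) : drsubmx Z = Sc Z + (aa Z)^-1 *: ((rr Z)^T *m rr Z).
  by rewrite /Sc subrK.
by rewrite (dr X) (dr Y) hS ha hr.
Qed.

Lemma prod_le_eq (R : realFieldType) (a a' d d' : R) :
  0 < a -> a <= a' -> 0 < d -> d <= d' -> a * d = a' * d' -> a = a' /\ d = d'.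
Proof.
move=> a0 aa' d0 dd' e.
have h1 : a * d <= a * d' by rewrite ler_pM2l.
have h2 : a * d' <= a' * d' by rewrite ler_pM2r // (lt_le_trans d0).
have e1 : a * d = a * d' by apply/eqP; rewrite eq_le h1 e h2.
have e2 : d = d' by apply: (mulfI (lt0r_neq0 a0)).
split=> //; apply: (mulIf (lt0r_neq0 (lt_le_trans d0 dd'))); rewrite -e e2 //.
Qed.

Lemma qf_Sc_min (R : realFieldType) n (X : 'M[R]_(1 + n)) (v : 'rV[R]_n) :
  PD X -> qf (Sc X) v = qf X (row_mx (- ((rr X *m v^T) 0 0 / aa X))%:M v).
Proof.
move=> PX; have a0 := PD_aa PX.
by rewrite qf_compl ?PX.1 ?gt_eqF // addNr expr0n /= mulr0 addr0.
Qed.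

Lemma qf_Sc_le (R : realFieldType) n (X : 'M[R]_(1 + n)) t (v : 'rV[R]_n) :
  PD X -> qf (Sc X) v <= qf X (row_mx t%:M v).
Proof.
move=> PX; have a0 := PD_aa PX.
by rewrite qf_compl ?PX.1 ?gt_eqF // lerDl mulr_ge0 ?(ltW a0) ?sqr_ge0.
Qed.

Lemma mono (R : realFieldType) n (X Y : 'M[R]_n) : PD X -> PD Y ->
  (forall v, qf Y v <= qf X v) -> \det Y <= \det X /\ (\det Y = \det X -> Y = X).
Proof.
elim: n X Y => [|n IH] X Y PX PY hle.
  by rewrite !det_mx00; split=> // _; apply/matrixP => -[].
have PX' : PD (X : 'M[R]_(1 + n)) := PX.
have PY' : PD (Y : 'M[R]_(1 + n)) := PY.
have aX := PD_aa PX'; have aY := PD_aa PY'.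
have hA : aa (Y : 'M[R]_(1 + n)) <= aa (X : 'M[R]_(1 + n)).
  by rewrite -(qf_e1 PX'.1) -(qf_e1 PY'.1) hle.
have hS : forall v, qf (Sc (Y : 'M[R]_(1 + n))) v <= qf (Sc (X : 'M[R]_(1 + n))) v.
  move=> v; rewrite (qf_Sc_min v PX'); apply: le_trans (hle _).
  exact: qf_Sc_le.
have [IH1 IH2] := IH _ _ (PD_Sc PX') (PD_Sc PY') hS.
have dSX := det_PD (PD_Sc PX'); have dSY := det_PD (PD_Sc PY').
rewrite (det_Sc PX'.1) ?gt_eqF // (det_Sc PY'.1) ?gt_eqF //.
split; first by rewrite ler_pM // ltW.
move=> /(prod_le_eq aY hA dSY IH1) [ea /IH2 eS].
apply: (parts_eq PY'.1 PX'.1 ea _ eS); apply: rv_eq => v.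
set a := aa (X : 'M[R]_(1 + n)).
set qX := (rr (X : 'M[R]_(1 + n)) *m v^T) 0 0.
set qY := (rr (Y : 'M[R]_(1 + n)) *m v^T) 0 0.
have := hle (row_mx (- (qX / a))%:M v).
rewrite -(qf_Sc_min v PX') qf_compl ?PY'.1 ?gt_eqF // eS ea -/a -/qY.
rewrite gerDl => hsq.
have : (- (qX / a) + qY / a) ^+ 2 == 0.
  by rewrite eq_le sqr_ge0 andbT -(pmulr_rle0 _ aX).
rewrite sqrf_eq0 addrC subr_eq0 => /eqP.
by move=> /(mulIf (invr_neq0 (lt0r_neq0 aX))).
Qed.
Lemma agm (R : realFieldType) k (E : 'I_k.+1 -> R) : (forall i, 0 < E i) ->
  (k.+1)%:R ^+ k.+1 * \prod_i E i <= (\sum_i E i) ^+ k.+1 /\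
  ((k.+1)%:R ^+ k.+1 * \prod_i E i = (\sum_i E i) ^+ k.+1 -> forall i, E i = E ord0).
Proof.
move=> E0.
have := @leif_AGM_scaled R _ predT E.
move=> /=; rewrite card_ord prodrMn_const card_ord -mulr_natl natrX.
move=> /(_ (fun i _ => mulrn_wge0 _ (ltW (E0 i)))) [h1 h2]; split=> // e.
move: h2; rewrite e eqxx => /esym/forallP h i.
by have /forallP/(_ ord0)/eqP := h i.
Qed.

Lemma PD_sum (R : realFieldType) n k (B : 'I_k.+1 -> 'M[R]_n) :
  (forall i, PD (B i)) -> PD (\sum_i B i).
Proof.
move=> PB; split.
  apply/matrixP => i j; rewrite mxE !summxE; apply: eq_bigr => l _.
  by have := (PB l).1 => /matrixP/(_ i j); rewrite mxE.
move=> v v0; rewrite qf_sum big_ord_recl.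
apply: (lt_le_trans ((PB ord0).2 v v0)); rewrite lerDl sumr_ge0 // => i _.
have [->|vi] := eqVneq v 0; first by rewrite qf0.
exact: ltW ((PB _).2 v vi).
Qed.

Lemma aa_sum (R : realFieldType) n k (B : 'I_k -> 'M[R]_(1 + n)) :
  aa (\sum_i B i) = \sum_i aa (B i).
Proof. by rewrite /aa !mxE summxE; apply: eq_bigr => i _; rewrite !mxE. Qed.

Lemma mink (R : realFieldType) n k (B : 'I_k.+1 -> 'M[R]_n) :
  (forall i, PD (B i)) ->
  (k.+1)%:R ^+ (n * k.+1) * \prod_i \det (B i) <= \det (\sum_i B i) ^+ k.+1 /\
  ((k.+1)%:R ^+ (n * k.+1) * \prod_i \det (B i) = \det (\sum_i B i) ^+ k.+1 ->
   forall i, B i = B ord0).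
Proof.
elim: n B => [|n IH] B PB.
  rewrite det_mx00 expr1n mul0n expr0 mul1r.
  rewrite big1 ?lexx; last by move=> i _; rewrite det_mx00.
  by split=> // _ i; apply/matrixP => -[].
pose B' i : 'M[R]_(1 + n) := B i.
have PB' i : PD (B' i) := PB i.
pose T := \sum_i B' i.
have PT : PD T := PD_sum PB'.
pose S i := Sc (B' i).
have PS i : PD (S i) := PD_Sc (PB' i).
have hST : forall v, qf (\sum_i S i) v <= qf (Sc T) v.
  move=> v; rewrite (qf_Sc_min v PT) qf_sum [X in _ <= X]qf_sum.
  by apply: ler_sum => i _; apply: qf_Sc_le.
have [M1 M2] := mono (PD_Sc PT) (PD_sum PS) hST.
have [I1 I2] := IH S PS.
have [G1 G2] := agm (fun i => PD_aa (PB' i)).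
have aT := PD_aa PT.
have dST := det_PD (PD_Sc PT).
have dSS := det_PD (PD_sum PS).
have a0 i := PD_aa (PB' i).
have d0 i := det_PD (PS i).
have Kp : 0 < (k.+1)%:R :> R by rewrite ltr0n.
have eT : \det (\sum_i B i) = aa T * \det (Sc T).
  by rewrite (det_Sc PT.1) ?gt_eqF.
have eL : (k.+1)%:R ^+ (n.+1 * k.+1) * \prod_i \det (B i) =
   ((k.+1)%:R ^+ k.+1 * \prod_i aa (B' i)) *
   ((k.+1)%:R ^+ (n * k.+1) * \prod_i \det (S i)).
  rewrite mulSn exprD.
  have -> : \prod_i \det (B i) = \prod_i aa (B' i) * \prod_i \det (S i).
    rewrite -big_split /=; apply: eq_bigr => i _.
    by rewrite (det_Sc (PB' i).1) ?gt_eqF.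
  ring.
have eR : \det (\sum_i B i) ^+ k.+1 =
   (\sum_i aa (B' i)) ^+ k.+1 * \det (Sc T) ^+ k.+1.
  by rewrite eT -aa_sum exprMn.
have P0 : 0 < (k.+1)%:R ^+ k.+1 * \prod_i aa (B' i).
  by rewrite mulr_gt0 ?exprn_gt0 // prodr_gt0.
have Q0 : 0 < (k.+1)%:R ^+ (n * k.+1) * \prod_i \det (S i).
  by rewrite mulr_gt0 ?exprn_gt0 // prodr_gt0.
have D12 : \det (\sum_i S i) ^+ k.+1 <= \det (Sc T) ^+ k.+1.
  by rewrite lerXn2r // ?nnegrE ltW.
split.
  rewrite eL eR; apply: ler_pM => //; try exact: ltW.
  exact: le_trans D12.
rewrite eL eR => /(prod_le_eq P0 G1 Q0 (le_trans I1 D12)) [e1 e2].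
have eQ : (k.+1)%:R ^+ (n * k.+1) * \prod_i \det (S i) =
          \det (\sum_i S i) ^+ k.+1.
  by apply/eqP; rewrite eq_le I1 e2 D12.
have eSS : \sum_i S i = Sc T.
  apply: M2; apply/eqP; rewrite -(eqrXn2 (n:=k.+1)) ?ltW //.
  by rewrite -e2 eQ.
have eS := I2 eQ.
have ea := G2 e1.
move=> i; apply: (parts_eq (PB' i).1 (PB' ord0).1 (ea i) _ (eS i)).
apply: rv_eq => v.
set t := - ((rr T *m v^T) 0 0 / aa T).
have hz : \sum_j (qf (B' j) (row_mx t%:M v) - qf (S j) v) = 0.
  rewrite sumrB -qf_sum -qf_sum -/T -(qf_Sc_min v PT) eSS subrr //.
have hge j : 0 <= qf (B' j) (row_mx t%:M v) - qf (S j) v.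
  by rewrite subr_ge0 qf_Sc_le.
have hz' := psumr_eq0P (P := predT) (fun j _ => hge j) hz.
have key j : (rr (B' j) *m v^T) 0 0 = - t * aa (B' j).
  have := hz' j isT.
  rewrite qf_compl ?(PB' j).1 ?gt_eqF // addrC addKr => /eqP.
  rewrite mulf_eq0 gt_eqF //= sqrf_eq0 addr_eq0 => /eqP h.
  move: h; set a := aa _; set q := (_ *m _) 0 0 => ->.
  by rewrite opprK divfK // lt0r_neq0 // a0.
by rewrite !key ea.
Qed.

Lemma PD_inv (R : realFieldType) n (A : 'M[R]_n) : PD A -> PD (invmx A).
Proof.
move=> PA; have uA : A \in unitmx by rewrite unitmxE unitfE gt_eqF // det_PD.
case: PA => sA pA; split; first by rewrite trmx_inv sA.
move=> v v0.
have -> : qf (invmx A) v = qf A (v *m invmx A).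
  rewrite /qf trmx_mul trmx_inv sA !mulmxA -(mulmxA v (invmx A) A).
  by rewrite mulVmx // mulmx1.
apply: pA; apply: contra v0 => /eqP h.
by rewrite -[v]mulmx1 -(mulVmx uA) mulmxA h mul0mx.
Qed.

Lemma det_castmx (R : comNzRingType) n n' (e : n = n') (A : 'M[R]_n) :
  \det (castmx (e, e) A) = \det A.
Proof. by case: n' / e; rewrite castmx_id. Qed.

Lemma det_mxdiag (R : comNzRingType) n m (A : 'I_m -> 'M[R]_n) :
  \det (@mxdiag R m (fun _ => n) A) = \prod_i \det (A i).
Proof.
elim: m A => [|m IH] A.
  by move: (mxdiag _); rewrite !big_ord0 => M; rewrite det_mx00.
by rewrite (@mxdiag_recl _ m (fun _ => n) A) det_castmx det_ublock IH big_ord_recl.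
Qed.

Lemma sylvester (R : comNzRingType) k l (X : 'M[R]_(k, l)) (Y : 'M[R]_(l, k)) :
  \det (1%:M + X *m Y) = \det (1%:M + Y *m X).
Proof.
pose Z := block_mx (1%:M : 'M[R]_k) (- X) Y (1%:M : 'M[R]_l).
have e1 : Z = block_mx 1%:M 0 Y 1%:M *m block_mx 1%:M (- X) 0 (1%:M + Y *m X).
  rewrite /Z mulmx_block; congr block_mx.
  - by rewrite mul1mx mul0mx addr0.
  - by rewrite mul1mx mul0mx addr0.
  - by rewrite mulmx1 mul1mx addr0.
  - by rewrite mul1mx mulmxN addrC addrK.
have e2 : Z = block_mx (1%:M + X *m Y) (- X) 0 1%:M *m block_mx 1%:M 0 Y 1%:M.
  rewrite /Z mulmx_block; congr block_mx.
  - by rewrite mulmx1 mulNmx addrK.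
  - by rewrite mulmx0 mulNmx mulmx1 add0r.
  - by rewrite mul0mx mul1mx add0r.
  - by rewrite mul0mx mulmx1 add0r.
have := congr1 determinant e1; rewrite {1}e2 !det_mulmx.
by rewrite !det_lblock !det_ublock !det1 !mul1r !mulr1 => ->.
Qed.

Lemma blockM_dec (R : realType) m n (A : 'I_m.+1 -> 'M[R]_n) :
  blockM A = @mxdiag R m (fun _ => n) (fun i => A (lift ord0 i)) +
    @mxcol R m (fun _ => n) n (fun _ => (1%:M : 'M[R]_n)) *m A ord0 *m
    (@mxcol R m (fun _ => n) n (fun _ => (1%:M : 'M[R]_n)))^T.
Proof.
rewrite tr_mxcol mxcol_mul mul_mxcol_mxrow /mxdiag -mxblockD /blockM.
apply: eq_mxblock => i j; rewrite !mul1mx trmx1 mulmx1.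
by case: (i == j); rewrite ?conform_mx_id ?add0r // addrC.
Qed.

Lemma PD_unit (R : realFieldType) n (A : 'M[R]_n) : PD A -> A \in unitmx.
Proof. by move=> PA; rewrite unitmxE unitfE gt_eqF // det_PD. Qed.

Lemma det_blockM (R : realType) m n (A : 'I_m.+1 -> 'M[R]_n) :
  (forall i, PD (A i)) ->
  \det (blockM A) = \prod_i \det (A i) * \det (\sum_i invmx (A i)).
Proof.
move=> PA; have uA i := PD_unit (PA i).
pose D := @mxdiag R m (fun _ => n) (fun i => A (lift ord0 i)).
pose U := @mxcol R m (fun _ => n) n (fun _ => (1%:M : 'M[R]_n)).
pose W := @mxcol R m (fun _ => n) n (fun i => invmx (A (lift ord0 i))).
have DW : D *m W = U.
  rewrite /D /W mul_mxdiag_mxcol; apply: eq_mxcol => i.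
  by rewrite mulmxV.
have eM : blockM A = D *m (1%:M + W *m (A ord0 *m U^T)).
  by rewrite mulmxDr mulmx1 !mulmxA DW blockM_dec.
have UW : U^T *m W = \sum_i invmx (A (lift ord0 i)).
  rewrite /U /W tr_mxcol mul_mxrow_mxcol; apply: eq_bigr => i _.
  by rewrite trmx1 mul1mx.
rewrite eM det_mulmx sylvester /D det_mxdiag -mulmxA UW.
rewrite -(mulmxV (uA ord0)) -mulmxDr det_mulmx.
rewrite [in RHS]big_ord_recl [in RHS]big_ord_recl; ring.
Qed.

Lemma ln_prod (R : realType) k (f : 'I_k -> R) : (forall i, 0 < f i) ->
  ln (\prod_i f i) = \sum_i ln (f i).
Proof.
elim: k f => [|k IH] f hf; first by rewrite !big_ord0 ln1.
rewrite !big_ord_recl lnM ?IH // posrE ?hf //.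
by apply: prodr_gt0 => i _.
Qed.

Lemma PD_posdef (R : realType) n (A : 'M[R]_n) : posdef_sym A -> PD A.
Proof. by []. Qed.

Lemma lnFn (R : realType) m n (A : 'I_m.+1 -> 'M[R]_n) :
  (forall i, PD (A i)) ->
  0 < Fn A /\
  ln (Fn A) = (m%:R / (2 * (m.+1)%:R)) * (\sum_i ln (\det (A i)))
     - 2^-1 * (\sum_i ln (\det (A i)) + ln (\det (\sum_i invmx (A i)))).
Proof.
move=> PA; have d0 i := det_PD (PA i).
have dS : 0 < \det (\sum_i invmx (A i)) by apply/det_PD/PD_sum => i; apply: PD_inv.
have P0 : 0 < \prod_i \det (A i) by apply: prodr_gt0 => i _.
have F1 : 0 < \prod_(i < m.+1) powR (\det (A i)) (m%:R / (2 * (m.+1)%:R)).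
  by apply: prodr_gt0 => i _; apply: powR_gt0.
have F2 : 0 < powR (\det (blockM A)) (- (1 / 2)).
  by apply: powR_gt0; rewrite det_blockM // mulr_gt0.
split; first by rewrite /Fn mulr_gt0.
rewrite /Fn lnM ?posrE // ln_prod; last by move=> i; apply: powR_gt0.
rewrite ln_powR det_blockM // lnM ?posrE // ln_prod //.
under eq_bigr do rewrite ln_powR.
by rewrite -mulr_sumr mul1r mulNr.
Qed.

Lemma main_ineq (R : realType) m n (A : 'I_m.+1 -> 'M[R]_n) :
  (forall i, PD (A i)) ->
  Fn A <= powR (m.+1)%:R (- (n%:R / 2)) /\
  (Fn A = powR (m.+1)%:R (- (n%:R / 2)) <-> forall i, A i = A ord0).
Proof.
move=> PA; have [F0 eF] := lnFn PA.
have d0 i := det_PD (PA i).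
pose B i := invmx (A i).
have PB i : PD (B i) by apply: PD_inv.
have [M1 M2] := mink PB.
set k : R := (m.+1)%:R.
have k0 : 0 < k by rewrite ltr0n.
have hk : k = m%:R + 1 by rewrite /k -natr1.
set c := powR k (- (n%:R / 2)).
have c0 : 0 < c by apply: powR_gt0.
have lnc : ln c = - (n%:R / 2) * ln k by rewrite ln_powR.
set L := \sum_i ln (\det (A i)) in eF.
set x := ln (\det (\sum_i invmx (A i))) in eF.
have dB i : \det (B i) = (\det (A i))^-1 by rewrite det_inv.
have dS : 0 < \det (\sum_i B i) by apply/det_PD/PD_sum.
have LP : 0 < k ^+ (n * m.+1) * \prod_i \det (B i).
  by rewrite mulr_gt0 ?exprn_gt0 // prodr_gt0 // => i _; rewrite dB invr_gt0.
have lnL : ln (k ^+ (n * m.+1) * \prod_i \det (B i)) = n%:R * k * ln k - L.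
  rewrite lnM ?posrE ?exprn_gt0 ?prodr_gt0 //; last by move=> i _; rewrite dB invr_gt0.
  rewrite lnXn // ln_prod; last by move=> i; rewrite dB invr_gt0.
  under eq_bigr do rewrite dB lnV ?posrE //.
  by rewrite sumrN -[ln k *+ _]mulr_natr natrM -/k [ln k * _]mulrC.
have lnRr : ln (\det (\sum_i B i) ^+ m.+1) = x * k.
  by rewrite lnXn // -mulr_natr.
have E : ln c - ln (Fn A) = (x * k - (n%:R * k * ln k - L)) / (2 * k).
  by rewrite eF lnc hk; field; rewrite -hk gt_eqF.
have ile : ln (Fn A) <= ln c.
  rewrite -subr_ge0 E; apply: divr_ge0; last by rewrite mulr_ge0 // ltW.
  by rewrite subr_ge0 -lnL -lnRr ler_ln ?posrE ?exprn_gt0.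
split; first by rewrite -ler_ln ?posrE.
split.
  move=> eFc; have : ln c - ln (Fn A) = 0 by rewrite eFc subrr.
  have k2 : 2 * k != 0 by rewrite mulf_neq0 // gt_eqF.
  rewrite E => /eqP; rewrite mulf_eq0 invr_eq0 (negbTE k2) orbF.
  rewrite subr_eq0 -lnL -lnRr => /eqP /ln_inj eq.
  have /M2 h : k ^+ (n * m.+1) * \prod_i \det (B i) = \det (\sum_i B i) ^+ m.+1.
    by rewrite eq // posrE ?exprn_gt0.
  move=> i; have := h i; rewrite /B => /(congr1 invmx).
  by rewrite !invmxK.
move=> hA.
apply: ln_inj; rewrite ?posrE //; apply/esym/eqP; rewrite -subr_eq0 E.
have eL : L = ln (\det (A ord0)) * k.
  by rewrite /L; under eq_bigr do rewrite hA; rewrite sumr_const card_ord -mulr_natr.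
have ex : x = n%:R * ln k - ln (\det (A ord0)).
  rewrite /x; under eq_bigr do rewrite hA; rewrite sumr_const card_ord.
  rewrite -scaler_nat detZ det_inv lnM ?posrE ?exprn_gt0 ?invr_gt0 //.
  by rewrite lnXn // lnV ?posrE // mulr_natl.
by rewrite eL ex mulf_eq0; apply/orP; left; apply/eqP; ring.
Qed.

Lemma PD1 (R : realFieldType) n : PD (1%:M : 'M[R]_n).
Proof.
have sq (x : R) : 0 <= x * x by rewrite -expr2 sqr_ge0.
split; first by rewrite trmx1.
move=> v v0; rewrite /qf mulmx1 mxE.
under eq_bigr do rewrite mxE.
rewrite lt_def sumr_ge0 ?andbT; last by move=> j _; rewrite sq.
apply/negP => /eqP h; move/eqP: v0; apply; apply/rowP => j.
have hz := psumr_eq0P (P := predT) (fun j _ => sq (v 0 j)) h.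
have := hz j isT.
by move/eqP; rewrite mulf_eq0 orbb mxE => /eqP.
Qed.

Local Open Scope classical_set_scope.

Theorem corollary5p7 (R : realType) (m n : nat) :
  let c : R := powR (m.+1)%:R (- (n%:R / 2)) in
  let S := [set Fn A | A in [set A : 'I_m.+1 -> 'M[R]_n | forall i, posdef_sym (A i)]] in
  sup S = c /\
  (forall A : 'I_m.+1 -> 'M[R]_n, (forall i, posdef_sym (A i)) -> Fn A <= c) /\
  (forall A : 'I_m.+1 -> 'M[R]_n, (forall i, posdef_sym (A i)) ->
     (Fn A = c <-> forall i, A i = A ord0)).
Proof.
move=> c S.
have ub : forall x, S x -> x <= c.
  by move=> _ [A hA <-]; exact: (main_ineq (fun i => PD_posdef (hA i))).1.
have cS : S c.
  exists (fun _ => 1%:M); first by move=> i; apply: PD1.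
  by apply/(main_ineq (fun i => PD1 R n)).2.
split.
  apply/eqP; rewrite eq_le; apply/andP; split.
    by apply: ge_sup => //; exists c.
  by apply: ub_le_sup => //; exists c.
split=> A hA; first exact: (main_ineq (fun i => PD_posdef (hA i))).1.
exact: (main_ineq (fun i => PD_posdef (hA i))).2.
Qed.
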